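(* Fix $n\in\mathbb N$ and positive integers $m_1,m_2$. Let $\mathbf g_{kj}(t)$, $k,j\in\{1,2\}$, $t=1,\dots,n$, be complex random variables i.i.d. with a continuous distribution, $\mathbf G^n_{kj}$ the $n\times n$ diagonal matrix with diagonal entries $\mathbf g_{kj}(1),\dots,\mathbf g_{kj}(n)$, and $\mathbf V^n_1\in\mathbb C^{n\times m_1}$, $\mathbf V^n_2\in\mathbb C^{n\times m_2}$ matrices whose $t$-th rows $\vec{\mathbf v}_1(t)^\top,\vec{\mathbf v}_2(t)^\top$ are deterministic functions of $\mathcal G^{t-1}=\{\mathbf g_{kj}(s):k,j\in\{1,2\},s\le t-1\}$. Define the random set $\mathcal T=\{t\in\{1,\dots,n\}: [\vec{\mathbf v}_1(t)^\top\ \vec 0_{1\times m_2}]\in\mathrm{rowspan}[\mathbf G^{t-1}_{21}\mathbf V^{t-1}_1\ \ \mathbf G^{t-1}_{22}\mathbf V^{t-1}_2]\text{ and }[\vec 0_{1\times m_1}\ \vec{\mathbf v}_2(t)^\top]\in\mathrm{rowspan}[\mathbf G^{t-1}_{21}\mathbf V^{t-1}_1\ \ \mathbf G^{t-1}_{22}\mathbf V^{t-1}_2]\}$, and random integers $\mathbf r_1=\dim\mathrm{span}\{\vec s\in\mathbb C^{m_1}:\exists\vec l\in\mathbb C^n,\ [\vec s^\top\ \vec 0_{1\times m_2}]=\vec l^\top[\mathbf G^n_{21}\mathbf V^n_1\ \ \mathbf G^n_{22}\mathbf V^n_2]\}$ and $\mathbf r_2=\dim\mathrm{span}\{\vec s\in\mathbb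 C^{m_2}:\exists\vec l\in\mathbb C^n,\ [\vec 0_{1\times m_1}\ \vec s^\top]=\vec l^\top[\mathbf G^n_{21}\mathbf V^n_1\ \ \mathbf G^n_{22}\mathbf V^n_2]\}$. Then: (i) almost surely, $\mathrm{rank}[\mathbf G^n_{11}\mathbf V^n_1\ \ \mathbf G^n_{12}\mathbf V^n_2]-\mathrm{rank}[\mathbf G^n_{21}\mathbf V^n_1\ \ \mathbf G^n_{22}\mathbf V^n_2]\le\mathrm{rank}[\mathbf G^{\mathcal T}_{11}\mathbf V^{\mathcal T}_1\ \ \mathbf G^{\mathcal T}_{12}\mathbf V^{\mathcal T}_2]$; (ii) $\mathrm{rank}[\mathbf V^{\mathcal T}_j]\le\mathbf r_j$ for $j=1,2$; (iii) almost surely, $\mathbf r_j\le\mathrm{rank}[\mathbf G^n_{21}\mathbf V^n_1\ \ \mathbf G^n_{22}\mathbf V^n_2]-\mathrm{rank}[\mathbf V^n_{3-j}]$ for $j=1,2$.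
   Context: For $t\le n$, $\mathbf G^{t}_{kj}$ and $\mathbf V^{t}_j$ denote the leading $t\times t$ principal submatrix of $\mathbf G^n_{kj}$ and the first $t$ rows of $\mathbf V^n_j$; for $t=0$ the matrix $[\mathbf G^0_{21}\mathbf V^0_1\ \ \mathbf G^0_{22}\mathbf V^0_2]$ is the zero row (rank 0, rowspan $\{0\}$). For the random index set $\mathcal T$, $\mathbf V^{\mathcal T}_j$ is the submatrix of $\mathbf V^n_j$ consisting of the rows with indices in $\mathcal T$, and $\mathbf G^{\mathcal T}_{kj}$ is the $|\mathcal T|\times|\mathcal T|$ diagonal matrix with entries $\mathbf g_{kj}(t)$, $t\in\mathcal T$. *)

(* Defs.v *)
From HB Require Import structures.
From mathcomp Require Import all_boot all_order all_algebra.
From mathcomp Require Import all_classical all_reals all_analysis.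
From mathcomp Require Import complex.
Set Implicit Arguments. Unset Strict Implicit. Unset Printing Implicit Defensive.
Import Order.TTheory GRing.Theory Num.Theory.
Local Open Scope ring_scope.
Local Open Scope classical_set_scope.

(* Indices k, j in {1,2} of the paper are encoded as 'I_2 (0 <-> 1, 1 <-> 2);
   times t in {1..n} are encoded as 'I_n (t-1 <-> t).  A realization of all the
   g's is a function  x : 'I_2 -> 'I_2 -> 'I_n -> C. *)

Section Defs.
Variable R : realType.
Local Notation C := R[i].

(* complex number as a point of the measurable space R * R *)
Definition cpair (z : C) : R * R := (complex.Re z, complex.Im z).

Variable n : nat.

Definition Gmat (x : 'I_2 -> 'I_2 -> 'I_n -> C) (k j : 'I_2) : 'M[C]_n :=
  diag_mx (\row_t x k j t).

Definition Vmat m (f : 'I_n -> ('I_2 -> 'I_2 -> 'I_n -> C) -> 'rV[C]_m)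
  (x : 'I_2 -> 'I_2 -> 'I_n -> C) : 'M[C]_(n, m) := \matrix_(t < n) f t x.

Definition blk (x : 'I_2 -> 'I_2 -> 'I_n -> C) (k : 'I_2) m1 m2
  (V1 : 'M[C]_(n, m1)) (V2 : 'M[C]_(n, m2)) : 'M[C]_(n, m1 + m2) :=
  row_mx (Gmat x k 0 *m V1) (Gmat x k 1 *m V2).

Definition lead_sq (t : 'I_n) (M : 'M[C]_n) : 'M[C]_t :=
  \matrix_(i, j) M (widen_ord (ltnW (ltn_ord t)) i) (widen_ord (ltnW (ltn_ord t)) j).
Definition lead_rows (t : 'I_n) m (M : 'M[C]_(n, m)) : 'M[C]_(t, m) :=
  \matrix_(i, j) M (widen_ord (ltnW (ltn_ord t)) i) j.

(* [G^t_{21} V^t_1  G^t_{22} V^t_2]  (t rows: the times strictly before t) *)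
Definition lead_blk (x : 'I_2 -> 'I_2 -> 'I_n -> C) (t : 'I_n) m1 m2
  (V1 : 'M[C]_(n, m1)) (V2 : 'M[C]_(n, m2)) : 'M[C]_(t, m1 + m2) :=
  row_mx (lead_sq t (Gmat x 1 0) *m lead_rows t V1)
         (lead_sq t (Gmat x 1 1) *m lead_rows t V2).

Definition Tset (x : 'I_2 -> 'I_2 -> 'I_n -> C) m1 m2
  (V1 : 'M[C]_(n, m1)) (V2 : 'M[C]_(n, m2)) : {set 'I_n} :=
  [set t : 'I_n | (row_mx (row t V1) (0 : 'rV[C]_m2) <= lead_blk x t V1 V2)%MS
                && (row_mx (0 : 'rV[C]_m1) (row t V2) <= lead_blk x t V1 V2)%MS].

Definition sub_rows (A : {set 'I_n}) m (M : 'M[C]_(n, m)) : 'M[C]_(#|A|, m) :=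
  \matrix_(i, j) M (enum_val i) j.
Definition sub_G (A : {set 'I_n}) (x : 'I_2 -> 'I_2 -> 'I_n -> C) (k j : 'I_2)
  : 'M[C]_#|A| := diag_mx (\row_i x k j (enum_val i)).

Definition sub_blk (A : {set 'I_n}) (x : 'I_2 -> 'I_2 -> 'I_n -> C) m1 m2
  (V1 : 'M[C]_(n, m1)) (V2 : 'M[C]_(n, m2)) : 'M[C]_(#|A|, m1 + m2) :=
  row_mx (sub_G A x 0 0 *m sub_rows A V1) (sub_G A x 0 1 *m sub_rows A V2).

End Defs.
Arguments cpair {R}.

(* dimension of the span of a set S of row vectors: the least rank of a
   subspace (matrix row space) containing S, i.e. the dimension of the smallest
   subspace containing S. *)
Section DimSpan.
Variable F : fieldType.

Lemma span_dim_ex m (S : set 'rV[F]_m) :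
  exists k, `[< exists U : 'M[F]_m, \rank U = k /\ forall s, S s -> (s <= U)%MS >].
Proof.
exists m; apply/asboolP; exists 1%:M; split; first exact: mxrank1.
by move=> s _; exact: submx1.
Qed.

Definition span_dim m (S : set 'rV[F]_m) : nat := ex_minn (span_dim_ex S).
End DimSpan.

Section Prob.
Variables (R : realType) (d : measure_display) (Omega : measurableType d).
Variable P : probability Omega R.
Variable n : nat.
Local Notation C := R[i].
Variable g : 'I_2 -> 'I_2 -> 'I_n -> Omega -> C.

Definition gsample (w : Omega) : 'I_2 -> 'I_2 -> 'I_n -> C := fun k j t => g k j t w.

(* the g k j t are (measurable) complex random variables, mutually independent,
   identically distributed, with a continuous (atomless) distribution *)
Definition iid_continuous : Prop :=
  [/\ (forall (k j : 'I_2) (t : 'I_n), measurable_fun setT (cpair \o g k j t)),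
      (forall B : 'I_2 -> 'I_2 -> 'I_n -> set (R * R)%type,
         (forall (k j : 'I_2) (t : 'I_n), measurable (B k j t)) ->
         fine (P [set w | forall (k j : 'I_2) (t : 'I_n), B k j t (cpair (g k j t w))]) =
         \prod_(k < 2) \prod_(j < 2) \prod_(t < n)
            fine (P ((cpair \o g k j t) @^-1` B k j t))),
      (forall (k j : 'I_2) (t : 'I_n) (k' j' : 'I_2) (t' : 'I_n) (B : set (R * R)%type), measurable B ->
         P ((cpair \o g k j t) @^-1` B) = P ((cpair \o g k' j' t') @^-1` B))
    & (forall (k j : 'I_2) (t : 'I_n) (z : C), P [set w | g k j t w = z] = 0%E)].

(* sigma-algebra generated by G^{t-1} = { g k j s : s < t } (0-based times) *)
Definition past_events (t : 'I_n) : set (set Omega) :=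
  [set A | exists (k j : 'I_2) (s : 'I_n), (s < t)%N /\
     exists B : set (R * R)%type, measurable B /\ A = (cpair \o g k j s) @^-1` B].

Definition causal m (f : 'I_n -> ('I_2 -> 'I_2 -> 'I_n -> C) -> 'rV[C]_m) : Prop :=
  forall (t : 'I_n) (x y : 'I_2 -> 'I_2 -> 'I_n -> C),
    (forall (k j : 'I_2) (s : 'I_n), (s < t)%N -> x k j s = y k j s) -> f t x = f t y.

Definition adapted m (f : 'I_n -> ('I_2 -> 'I_2 -> 'I_n -> C) -> 'rV[C]_m) : Prop :=
  forall (t : 'I_n) (i : 'I_m) (B : set (R * R)%type), measurable B ->
    <<s past_events t >> ((fun w => cpair (f t (gsample w) 0 i)) @^-1` B).

End Prob.

(* Main.v *)
Require Import Defs.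
From HB Require Import structures.
From mathcomp Require Import all_boot all_order all_algebra.
From mathcomp Require Import all_classical all_reals all_analysis.
From mathcomp Require Import complex.
Import Order.TTheory GRing.Theory Num.Theory.
Local Open Scope ring_scope.
Local Open Scope classical_set_scope.
From mathcomp Require Import measurable_realfun.
Set Implicit Arguments. Unset Strict Implicit. Unset Printing Implicit Defensive.
Section Lin.
Variable R : realType.
Local Notation C := R[i].

Definition Pre n m (k : nat) (M : 'M[C]_(n,m)) : 'M[C]_(n,m) :=
  \matrix_(i, j) (if (i < k)%N then M i j else 0).

Lemma row_Pre n m k (M : 'M[C]_(n,m)) i :
  row i (Pre k M) = if (i < k)%N then row i M else 0.
Proof. by apply/rowP => j; rewrite !mxE; case: ifP => _; rewrite ?mxE. Qed.

Lemma blkE n (x : 'I_2 -> 'I_2 -> 'I_n -> C) k m1 m2 (V1 : 'M[C]_(n,m1)) (V2 : 'M[C]_(n,m2)) :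
  blk x k V1 V2 = row_mx (\matrix_(i, j) (x k 0 i * V1 i j)) (\matrix_(i, j) (x k 1 i * V2 i j)).
Proof.
rewrite /blk /Gmat !mul_diag_mx; congr row_mx; apply/matrixP => i j; rewrite !mxE //.
Qed.

Lemma widen_eq n m (h : (n <= m)%N) (i k : 'I_n) :
  (widen_ord h i == widen_ord h k) = (i == k).
Proof. by rewrite -val_eqE /= val_eqE. Qed.

Lemma row_lead_blk n (x : 'I_2 -> 'I_2 -> 'I_n -> C) (t : 'I_n) m1 m2
  (V1 : 'M[C]_(n,m1)) (V2 : 'M[C]_(n,m2)) (i : 'I_t) :
  row i (lead_blk x t V1 V2) = row (widen_ord (ltnW (ltn_ord t)) i) (blk x 1 V1 V2).
Proof.
apply/rowP => j; rewrite blkE !mxE.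
case: (splitP j) => j' _; rewrite ?row_mxEl ?row_mxEr !mxE.
- rewrite (bigD1 i) //= big1 ?addr0 => [|k /negPf nk]; rewrite !mxE ?eqxx ?mulr1n //.
  by rewrite widen_eq eq_sym nk mulr0n mul0r.
- rewrite (bigD1 i) //= big1 ?addr0 => [|k /negPf nk]; rewrite !mxE ?eqxx ?mulr1n //.
  by rewrite widen_eq eq_sym nk mulr0n mul0r.
Qed.

Lemma sub_lead_blk n (x : 'I_2 -> 'I_2 -> 'I_n -> C) (t : 'I_n) m1 m2
  (V1 : 'M[C]_(n,m1)) (V2 : 'M[C]_(n,m2)) p (u : 'M[C]_(p, m1 + m2)) :
  (u <= lead_blk x t V1 V2)%MS = (u <= Pre t (blk x 1 V1 V2))%MS.
Proof.
have h1 : (lead_blk x t V1 V2 <= Pre t (blk x 1 V1 V2))%MS.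
  apply/row_subP => i; rewrite row_lead_blk.
  have -> : row (widen_ord (ltnW (ltn_ord t)) i) (blk x 1 V1 V2) =
      row (widen_ord (ltnW (ltn_ord t)) i) (Pre t (blk x 1 V1 V2)).
    by rewrite row_Pre /= ltn_ord.
  exact: row_sub.
have h2 : (Pre t (blk x 1 V1 V2) <= lead_blk x t V1 V2)%MS.
  apply/row_subP => i; rewrite row_Pre; case: ifP => hi; last exact: sub0mx.
  have -> : i = widen_ord (ltnW (ltn_ord t)) (Ordinal hi) by apply/val_inj.
  by rewrite -row_lead_blk row_sub.
apply/idP/idP => h; [exact: submx_trans h h1|exact: submx_trans h h2].
Qed.


Lemma Pre_ge n m k (M : 'M[C]_(n,m)) : (n <= k)%N -> Pre k M = M.
Proof. by move=> hk; apply/matrixP => i j; rewrite mxE (leq_trans (ltn_ord i) hk). Qed.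

Lemma rank_ge_card n m (M : 'M[C]_(n,m)) (S : {set 'I_n}) :
  (forall t, t \in S -> ~~ (row t M <= Pre t M)%MS) -> (#|S| <= \rank M)%N.
Proof.
move=> hS.
suff H : forall k, (#|[set s in S | (s < k)%N]| <= \rank (Pre k M))%N.
  have := H n; rewrite Pre_ge //.
  suff -> : [set s in S | (s < n)%N] = S by [].
  by apply/setP => s; rewrite !inE ltn_ord andbT.
elim => [|k IH].
  suff -> : [set s in S | (s < 0)%N] = finset.set0 by rewrite cards0.
  by apply/setP => s; rewrite !inE ltn0 andbF.
have mono : (Pre k M <= Pre k.+1 M)%MS.
  apply/row_subP => i; rewrite row_Pre; case: ifP => hi; last exact: sub0mx.
  have -> : row i M = row i (Pre k.+1 M) by rewrite row_Pre ltnS ltnW.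
  exact: row_sub.
case: (ltnP k n) => hkn; last first.
  rewrite !Pre_ge ?(leq_trans hkn) // in IH *.
  suff -> : [set s in S | (s < k.+1)%N] = [set s in S | (s < k)%N] by [].
  by apply/setP => s; rewrite !inE ltnS (leq_trans (ltn_ord s) hkn) (leq_trans _ hkn) ?ltn_ord // ltnW.
pose t := Ordinal hkn.
have rowt : (row t M <= Pre k.+1 M)%MS.
  have -> : row t M = row t (Pre k.+1 M) by rewrite row_Pre /= ltnS leqnn.
  exact: row_sub.
case tS : (t \in S); last first.
  suff -> : [set s in S | (s < k.+1)%N] = [set s in S | (s < k)%N].
    exact: leq_trans IH (mxrankS mono).
  apply/setP => s; rewrite !inE ltnS leq_eqVlt.
  case: eqP => [hs|hs] /=; last by [].
  have st : s = t by apply/val_inj.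
  by rewrite st tS.
have -> : [set s in S | (s < k.+1)%N] = t |: [set s in S | (s < k)%N].
  apply/setP => s; rewrite !inE ltnS leq_eqVlt -val_eqE /=.
  case: eqP => [hs|hs] /=; last by [].
  have st : s = t by apply/val_inj.
  by rewrite st tS.
rewrite cardsU1 !inE /= ltnn andbF /= add1n.
have : (Pre k M < (Pre k M + row t M)%MS)%MS.
  rewrite ltmxE addsmxSl /=; apply/negP => h.
  move/negP: (hS t tS); apply; rewrite /=.
  exact: submx_trans (addsmxSr _ _) h.
rewrite ltmxErank => /andP[_ hlt].
apply: leq_ltn_trans IH _; apply: leq_trans hlt _.
apply: mxrankS; by rewrite addsmx_sub mono rowt.
Qed.

Lemma rank_split n m (M : 'M[C]_(n,m)) (A : {set 'I_n}) :
  (\rank M <= \rank (sub_rows A M) + #|~: A|)%N.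
Proof.
have hM : (M <= sub_rows A M + sub_rows (~: A) M)%MS.
  apply/row_subP => i; case hi : (i \in A).
  - have -> : row i M = row (enum_rank_in hi i) (sub_rows A M).
      by apply/rowP => j; rewrite !mxE enum_rankK_in.
    exact: submx_trans (row_sub _ _) (addsmxSl _ _).
  - have hi' : i \in ~: A by rewrite inE hi.
    have -> : row i M = row (enum_rank_in hi' i) (sub_rows (~: A) M).
      by apply/rowP => j; rewrite !mxE enum_rankK_in.
    exact: submx_trans (row_sub _ _) (addsmxSr _ _).
apply: leq_trans (mxrankS hM) _.
apply: leq_trans (mxrank_adds_leqif _ _).1 _.
by rewrite leq_add2l rank_leq_row.
Qed.

Lemma sub_blkE n (A : {set 'I_n}) (x : 'I_2 -> 'I_2 -> 'I_n -> C) m1 m2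
  (V1 : 'M[C]_(n,m1)) (V2 : 'M[C]_(n,m2)) :
  sub_blk A x V1 V2 = sub_rows A (blk x 0 V1 V2).
Proof.
rewrite /sub_blk /sub_G !mul_diag_mx blkE.
apply/matrixP => i j; rewrite !mxE.
by case: (splitP j) => j' _; rewrite ?row_mxEl ?row_mxEr !mxE.
Qed.


Lemma Pre_sub n m k (M : 'M[C]_(n,m)) : (Pre k M <= M)%MS.
Proof.
apply/row_subP => i; rewrite row_Pre; case: ifP => _; [exact: row_sub|exact: sub0mx].
Qed.

Lemma span_dim_ge m (S : set 'rV[C]_m) p (U : 'M[C]_(p, m)) :
  (forall s, S s -> (s <= U)%MS) -> (span_dim S <= \rank U)%N.
Proof.
move=> hU; rewrite /span_dim; case: ex_minnP => k _ hmin; apply: hmin.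
apply/asboolP; exists <<U>>%MS; rewrite genmxE; split => // s /hU.
by rewrite genmxE.
Qed.

Lemma span_dim_le m (S : set 'rV[C]_m) p (U : 'M[C]_(p, m)) :
  (forall i, S (row i U)) -> (\rank U <= span_dim S)%N.
Proof.
move=> hU; rewrite /span_dim; case: ex_minnP => k /asboolP [W [<- hW]] _.
by apply: mxrankS; apply/row_subP => i; apply: hW.
Qed.

Lemma span1_bound n m1 m2 (A : 'M[C]_(n, m1)) (B : 'M[C]_(n, m2)) :
  (span_dim [set s : 'rV[C]_m1 | exists l : 'rV[C]_n, row_mx s (0 : 'rV[C]_m2) = l *m row_mx A B]
     + \rank B <= \rank (row_mx A B))%N.
Proof.
set M := row_mx A B.
pose Q2 : 'M[C]_(m1 + m2, m2) := col_mx 0 1%:M.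
pose Q1 : 'M[C]_(m1 + m2, m1) := col_mx 1%:M 0.
have MQ2 : M *m Q2 = B by rewrite mul_row_col mulmx0 mulmx1 add0r.
rewrite -(mxrank_mul_ker M Q2) MQ2 addnC leq_add2l.
apply: (leq_trans _ (mxrankM_maxl _ Q1)); apply: span_dim_ge => s [l hl].
have -> : s = row_mx s (0 : 'rV[C]_m2) *m Q1 by rewrite mul_row_col mulmx1 mul0mx addr0.
apply: submxMr; rewrite sub_capmx; apply/andP; split.
  by rewrite hl submxMl.
by apply/sub_kermxP; rewrite mul_row_col mulmx0 mul0mx addr0.
Qed.

Lemma span2_bound n m1 m2 (A : 'M[C]_(n, m1)) (B : 'M[C]_(n, m2)) :
  (span_dim [set s : 'rV[C]_m2 | exists l : 'rV[C]_n, row_mx (0 : 'rV[C]_m1) s = l *m row_mx A B]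
     + \rank A <= \rank (row_mx A B))%N.
Proof.
set M := row_mx A B.
pose Q2 : 'M[C]_(m1 + m2, m2) := col_mx 0 1%:M.
pose Q1 : 'M[C]_(m1 + m2, m1) := col_mx 1%:M 0.
have MQ1 : M *m Q1 = A by rewrite mul_row_col mulmx0 mulmx1 addr0.
rewrite -(mxrank_mul_ker M Q1) MQ1 addnC leq_add2l.
apply: (leq_trans _ (mxrankM_maxl _ Q2)); apply: span_dim_ge => s [l hl].
have -> : s = row_mx (0 : 'rV[C]_m1) s *m Q2 by rewrite mul_row_col mulmx1 mul0mx add0r.
apply: submxMr; rewrite sub_capmx; apply/andP; split.
  by rewrite hl submxMl.
by apply/sub_kermxP; rewrite mul_row_col mulmx0 mul0mx addr0.
Qed.

Lemma rank_diag_mul n m (d : 'rV[C]_n) (V : 'M[C]_(n, m)) :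
  (forall i, d 0 i != 0) -> \rank (diag_mx d *m V) = \rank V.
Proof.
move=> hd; apply/eqP; rewrite eqn_leq mxrankM_maxr /=.
have e : V = diag_mx (\row_i (d 0 i)^-1) *m (diag_mx d *m V).
  by rewrite mulmxA mulmx_diag -[LHS]mul1mx -diag_const_mx; congr (_ *m _);
    congr diag_mx; apply/rowP => i; rewrite !mxE mulVf.
by rewrite {1}e mxrankM_maxr.
Qed.


Lemma colsub_col_mx_row r m p (h : 'I_p -> 'I_m) (R0 : 'M[C]_(r, m)) (x : 'rV[C]_m)
  (ii : 'I_(r + 1)) : ii != rshift r (0 : 'I_1) -> forall j,
  colsub h (col_mx R0 x) ii j = colsub h (col_mx R0 0) ii j.
Proof.
move=> hii j; rewrite !mxE.
case: (splitP ii) => k hk; rewrite ?col_mxEu ?col_mxEd //.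
exfalso; move/eqP: hii; apply; apply/val_inj => /=; rewrite hk.
by rewrite (ord1 k).
Qed.

Lemma det_lin r m (h : 'I_(r + 1) -> 'I_m) (R0 : 'M[C]_(r, m)) (u v : 'rV[C]_m) (a b : C) :
  \det (colsub h (col_mx R0 (a *: u + b *: v))) =
  a * \det (colsub h (col_mx R0 u)) + b * \det (colsub h (col_mx R0 v)).
Proof.
pose i0 := rshift r (0 : 'I_1).
apply: (determinant_multilinear (i0 := i0)).
- apply/rowP => j; rewrite !mxE.
  case: (splitP (rshift r (0 : 'I_1))) => k /= hk.
    by move: (ltn_ord k); rewrite -hk addn0 ltnn.
  by rewrite !mxE (ord1 k).
- apply/matrixP => k j.
  have nl : lift i0 k != rshift r (0 : 'I_1) by rewrite eq_sym neq_lift.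
  rewrite [LHS]mxE [RHS]mxE (colsub_col_mx_row h R0 (u) nl).
  by rewrite (colsub_col_mx_row h R0 (a *: u + b *: v) nl).
- apply/matrixP => k j.
  have nl : lift i0 k != rshift r (0 : 'I_1) by rewrite eq_sym neq_lift.
  rewrite [LHS]mxE [RHS]mxE (colsub_col_mx_row h R0 (v) nl).
  by rewrite (colsub_col_mx_row h R0 (a *: u + b *: v) nl).
Qed.

Lemma det_colsub_le r m (h : 'I_(r + 1) -> 'I_m) n (A : 'M[C]_(n, m)) (Y : 'M[C]_(r + 1, m)) :
  (Y <= A)%MS -> (\rank A <= r)%N -> \det (colsub h Y) = 0.
Proof.
move=> YA rA; apply/eqP; apply: contraT => hd.
have : colsub h Y \in unitmx by rewrite unitmxE unitfE.
move/mxrank_unit => e.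
have : (\rank (colsub h Y) <= r)%N.
  have -> : colsub h Y = Y *m colsub h 1%:M by rewrite mulmx_colsub mulmx1.
  apply: leq_trans (mxrankM_maxl _ _) _; exact: leq_trans (mxrankS YA) rA.
by rewrite e addn1 ltnn.
Qed.

Lemma det_colsub_full r m n (A : 'M[C]_(n, m)) (R0 : 'M[C]_(r, m)) (x : 'rV[C]_m) :
  (R0 :=: A)%MS -> \rank A = r -> ~~ (x <= A)%MS ->
  exists h : {ffun 'I_(r + 1) -> 'I_m}, \det (colsub h (col_mx R0 x)) != 0.
Proof.
move=> eR rA xA.
set Y := col_mx R0 x.
have rY : \rank Y = (r + 1)%N.
  apply/eqP; rewrite eqn_leq rank_leq_row /=.
  rewrite /Y -addsmxE.
  have : (R0 < (R0 + x)%MS)%MS.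
    rewrite ltmxE addsmxSl /=; apply/negP => hh.
    by move/negP: xA; apply; rewrite -eR; exact: submx_trans (addsmxSr _ _) hh.
  by rewrite ltmxErank => /andP[_]; rewrite eR rA addn1.
have fY : row_full Y^T by rewrite /row_full mxrank_tr rY.
exists (fullrankfun fY).
have := fullrowsub_unit fY.
have -> : rowsub (fullrankfun fY) Y^T = (colsub (fullrankfun fY) Y)^T.
  by apply/matrixP => i j; rewrite !mxE.
by rewrite unitmx_tr unitmxE unitfE.
Qed.


Lemma cover_det n m (A : 'M[C]_(n, m)) (u v : 'rV[C]_m) (a b : C) :
  ((a *: u + b *: v)%R <= A)%MS -> ~~ ((u <= A)%MS && (v <= A)%MS) ->
  exists r (f : {ffun 'I_r -> 'I_n}) (h : {ffun 'I_(r + 1) -> 'I_m}),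
    (\det (colsub h (col_mx (rowsub f A) u)) != 0 \/
     \det (colsub h (col_mx (rowsub f A) v)) != 0) /\
    a * \det (colsub h (col_mx (rowsub f A) u)) +
    b * \det (colsub h (col_mx (rowsub f A) v)) = 0.
Proof.
move=> hab huv; exists (\rank A), (maxrankfun A).
have eR := eq_maxrowsub A.
have H0 : forall h : {ffun 'I_(\rank A + 1) -> 'I_m},
    a * \det (colsub h (col_mx (rowsub (maxrankfun A) A) u)) +
    b * \det (colsub h (col_mx (rowsub (maxrankfun A) A) v)) = 0.
  move=> h; rewrite -det_lin; apply: det_colsub_le (leqnn _).
  by rewrite col_mx_sub eR submx_refl hab.
case hu : (u <= A)%MS.
- have hv : ~~ (v <= A)%MS by move: huv; rewrite hu.
  have [h hh] := det_colsub_full eR erefl hv.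
  by exists h; split; [right|exact: H0].
- have [h hh] := det_colsub_full eR erefl (negbT hu).
  by exists h; split; [left|exact: H0].
Qed.


Lemma row_blk1 n (x : 'I_2 -> 'I_2 -> 'I_n -> C) m1 m2 (V1 : 'M[C]_(n,m1)) (V2 : 'M[C]_(n,m2)) t :
  row t (blk x 1 V1 V2) = x 1 0 t *: row_mx (row t V1) (0 : 'rV[C]_m2) +
                          x 1 1 t *: row_mx (0 : 'rV[C]_m1) (row t V2).
Proof.
apply/rowP => j; rewrite blkE !mxE.
by case: (fintype.split j) => k; rewrite !mxE ?mulr0 ?addr0 ?add0r.
Qed.

End Lin.

Section MC.
Variable R : realType.
Local Notation C := R[i].

Lemma ReD' (x y : C) : complex.Re (x + y) = complex.Re x + complex.Re y.
Proof. by case: x => ? ?; case: y => ? ?. Qed.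
Lemma ImD' (x y : C) : complex.Im (x + y) = complex.Im x + complex.Im y.
Proof. by case: x => ? ?; case: y => ? ?. Qed.
Lemma ReM' (x y : C) : complex.Re (x * y) = complex.Re x * complex.Re y - complex.Im x * complex.Im y.
Proof. by case: x => ? ?; case: y => ? ?. Qed.
Lemma ImM' (x y : C) : complex.Im (x * y) = complex.Re x * complex.Im y + complex.Im x * complex.Re y.
Proof. by case: x => ? ?; case: y => ? ?. Qed.

Definition toC (p : R * R) : C := (p.1 +i* p.2)%C.
Lemma cpairK (z : C) : toC (cpair z) = z. Proof. by case: z. Qed.
Lemma toCK (p : R * R) : cpair (toC p) = p. Proof. by case: p. Qed.

Context d (T : measurableType d).
Definition mC (h : T -> C) := measurable_fun setT (fun x => cpair (h x)).

Lemma mCP (h : T -> C) : mC h <->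
  measurable_fun setT (fun x => complex.Re (h x)) /\ measurable_fun setT (fun x => complex.Im (h x)).
Proof. exact: (measurable_fun_pairP (fun x => cpair (h x))). Qed.

Lemma mC_congr (h1 h2 : T -> C) : (forall x, h1 x = h2 x) -> mC h2 -> mC h1.
Proof. by move=> e; rewrite /mC (_ : (fun x => cpair (h1 x)) = (fun x => cpair (h2 x))) // ; apply/funext => x; rewrite e. Qed.

Lemma mC_cst c : mC (fun _ => c).
Proof. exact: measurable_cst. Qed.

Lemma mC_add h1 h2 : mC h1 -> mC h2 -> mC (fun x => h1 x + h2 x).
Proof.
move=> /mCP[r1 i1] /mCP[r2 i2]; apply/mCP; split.
  under eq_fun do rewrite ReD'; exact: measurable_funD.
under eq_fun do rewrite ImD'; exact: measurable_funD.
Qed.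

Lemma mC_mul h1 h2 : mC h1 -> mC h2 -> mC (fun x => h1 x * h2 x).
Proof.
move=> /mCP[r1 i1] /mCP[r2 i2]; apply/mCP; split.
  under eq_fun do rewrite ReM'; by apply: measurable_funB; exact: measurable_funM.
under eq_fun do rewrite ImM'; by apply: measurable_funD; exact: measurable_funM.
Qed.

Lemma mC_sum (I : Type) (s : seq I) (F : I -> T -> C) :
  (forall i, mC (F i)) -> mC (fun x => \sum_(i <- s) F i x).
Proof.
move=> hF; elim: s => [|i s IH].
  under eq_fun do rewrite big_nil; exact: mC_cst.
under eq_fun do rewrite big_cons; exact: mC_add.
Qed.

Lemma mC_prod (I : Type) (s : seq I) (F : I -> T -> C) :
  (forall i, mC (F i)) -> mC (fun x => \prod_(i <- s) F i x).
Proof.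
move=> hF; elim: s => [|i s IH].
  under eq_fun do rewrite big_nil; exact: mC_cst.
under eq_fun do rewrite big_cons; exact: mC_mul.
Qed.

Lemma mC_toC (p : T -> R * R) : measurable_fun setT p -> mC (fun x => toC (p x)).
Proof. by move=> mp; rewrite /mC; under eq_fun do rewrite toCK. Qed.

Definition mCM p q (M : T -> 'M[C]_(p, q)) := forall i j, mC (fun x => M x i j).

Lemma mC_det k (M : T -> 'M[C]_k) : mCM M -> mC (fun x => \det (M x)).
Proof.
move=> hM; rewrite /determinant; apply: mC_sum => s.
apply: mC_mul; first exact: mC_cst.
by apply: mC_prod => i; exact: hM.
Qed.

Lemma mCM_colsub p q q' (h : 'I_q' -> 'I_q) (M : T -> 'M[C]_(p, q)) :
  mCM M -> mCM (fun x => colsub h (M x)).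
Proof. by move=> hM i j; under eq_fun do rewrite mxE; exact: hM. Qed.

Lemma mCM_rowsub p p' q (f : 'I_p' -> 'I_p) (M : T -> 'M[C]_(p, q)) :
  mCM M -> mCM (fun x => rowsub f (M x)).
Proof. by move=> hM i j; under eq_fun do rewrite mxE; exact: hM. Qed.

Lemma mCM_col_mx p1 p2 q (M1 : T -> 'M[C]_(p1, q)) (M2 : T -> 'M[C]_(p2, q)) :
  mCM M1 -> mCM M2 -> mCM (fun x => col_mx (M1 x) (M2 x)).
Proof.
move=> h1 h2 i j; under eq_fun do rewrite mxE.
by case: (fintype.split i) => k; [exact: h1|exact: h2].
Qed.

Lemma mC_eq0 (h : T -> C) : mC h -> measurable [set x | h x = 0].
Proof.
move=> mh.
have -> : [set x | h x = 0] = setT `&` (fun x => cpair (h x)) @^-1` ([set 0] `*` [set 0]).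
  apply/seteqP; split => x /=.
    by move=> ->; split.
  by move=> [_ [/= h1 h2]]; rewrite -[h x]cpairK /toC /cpair h1 h2.
apply: mh => //; apply: measurableX; exact: measurable_set1.
Qed.

End MC.

Section PiSys.
Context (R : realType) d (Omega : measurableType d) (P : probability Omega R).
Context (n : nat) (g : 'I_2 -> 'I_2 -> 'I_n -> Omega -> R[i]).
Hypothesis Hiid : iid_continuous P g.

Definition allowed (t : 'I_n) (k j : 'I_2) (s : 'I_n) : bool :=
  (s < t)%N || [&& k == 1, j == 0 & s == t].

Definition rect (B : 'I_2 -> 'I_2 -> 'I_n -> set (R * R)) : set Omega :=
  [set w | forall k j s, B k j s (cpair (g k j s w))].

Definition Pi (t : 'I_n) : set (set Omega) :=
  [set A | exists B : 'I_2 -> 'I_2 -> 'I_n -> set (R * R),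
     [/\ (forall k j s, measurable (B k j s)),
         (forall k j s, ~~ allowed t k j s -> B k j s = setT) & A = rect B]].

Lemma mg k j s : measurable_fun setT (fun w => cpair (g k j s w)).
Proof. by case: Hiid => h _ _ _; exact: h. Qed.

Lemma rect_meas B : (forall k j s, measurable (B k j s)) -> measurable (rect B).
Proof.
move=> hB.
have -> : rect B = \bigcap_(i in [set: 'I_2 * 'I_2 * 'I_n])
    ((fun w => cpair (g i.1.1 i.1.2 i.2 w)) @^-1` B i.1.1 i.1.2 i.2).
  apply/seteqP; split => w /=.
    by move=> h [[k j] s] _; exact: h.
  by move=> h k j s; exact: (h (k, j, s)).
apply: fin_bigcap_measurable; first exact: finite_finset.
move=> [[k j] s] _ /=; rewrite -[X in measurable X]setTI; apply: mg => //.
Qed.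

Lemma Pi_meas t : Pi t `<=` measurable.
Proof. by move=> A [B [hB _ ->]]; exact: rect_meas. Qed.

Lemma Pi_setI t : setI_closed (Pi t).
Proof.
move=> A1 A2 [B1 [hB1 hT1 ->]] [B2 [hB2 hT2 ->]].
exists (fun k j s => B1 k j s `&` B2 k j s); split.
- by move=> k j s; apply: measurableI.
- by move=> k j s h; rewrite hT1 // hT2 // setIT.
- apply/seteqP; split => w /=.
    by move=> [h1 h2] k j s; split; [exact: h1|exact: h2].
  by move=> h; split => k j s; have [] := h k j s.
Qed.

Lemma Pi_T t : Pi t setT.
Proof.
exists (fun _ _ _ => setT); split => //.
by apply/seteqP; split => w.
Qed.

Lemma sPi_meas t : <<s Pi t >> `<=` measurable.
Proof. apply: smallest_sub; [exact: sigma_algebra_measurable|exact: Pi_meas]. Qed.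

Lemma Pi_single t k j s B : allowed t k j s -> measurable B ->
  Pi t ((fun w => cpair (g k j s w)) @^-1` B).
Proof.
move=> hal mB.
exists (fun k' j' s' => if [&& k' == k, j' == j & s' == s] then B else setT); split.
- by move=> k' j' s'; case: ifP.
- move=> k' j' s' h; case: ifP => // /and3P[/eqP e1 /eqP e2 /eqP e3].
  by move: h; rewrite e1 e2 e3 hal.
- apply/seteqP; split => w /=.
    by move=> h k' j' s'; case: ifP => // /and3P[/eqP -> /eqP -> /eqP ->].
  by move=> /(_ k j s); rewrite !eqxx.
Qed.


Definition Z (t : 'I_n) := fun w => cpair (g 1 1 t w).

Lemma prod_ind (t : 'I_n) (p : R) :
  \prod_(k < 2) \prod_(j < 2) \prod_(s < n)
     (if [&& k == 1, j == 1 & s == t] then p else 1) = p.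
Proof.
rewrite (bigD1 1) //= [X in _ * X]big1 ?mulr1; last first.
  move=> k hk; apply: big1 => j _; apply: big1 => s _.
  by rewrite (negPf hk).
rewrite (bigD1 1) //= [X in _ * X]big1 ?mulr1; last first.
  move=> j hj; apply: big1 => s _.
  by rewrite (negPf hj) /=.
rewrite (bigD1 t) //= eqxx [X in _ * X]big1 ?mulr1 //.
by move=> s hs; rewrite (negPf hs).
Qed.

Lemma indep_Pi t A B0 : Pi t A -> measurable B0 ->
  P (A `&` Z t @^-1` B0) = (P A * P (Z t @^-1` B0))%E.
Proof.
rewrite /Z.
move=> [B [hB hT ->]] mB0.
pose B' := fun k j s => if [&& k == 1, j == 1 & s == t] then B0 else B k j s.
have hB' : forall k j s, measurable (B' k j s) by move=> k j s; rewrite /B'; case: ifP.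
have B11 : B 1 1 t = setT by apply: hT; rewrite /allowed ltnn /=.
have eA : rect B `&` (fun w => cpair (g 1 1 t w)) @^-1` B0 = rect B'.
  apply/seteqP; split => w /=.
    move=> [h1 h2] k j s; rewrite /B'; case: ifP => // /and3P[/eqP -> /eqP -> /eqP ->].
    exact: h2.
  move=> h; split.
    move=> k j s; have := h k j s; rewrite /B'; case: ifP => //.
    by move=> /and3P[/eqP -> /eqP -> /eqP ->]; rewrite B11.
  by have := h 1 1 t; rewrite /B' !eqxx.
have mA : measurable (rect B) by exact: rect_meas.
have mZ : measurable ((fun w => cpair (g 1 1 t w)) @^-1` B0).
  rewrite -[X in measurable X]setTI; exact: mg.
have mA' : measurable (rect B') by exact: rect_meas.
have [_ Hprod _ _] := Hiid.
have H' := Hprod B' hB'.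
have H0 := Hprod B hB.
pose p := fine (P ((fun w => cpair (g 1 1 t w)) @^-1` B0)).
have eF : forall k j s,
    fine (P ((cpair \o g k j s) @^-1` B' k j s)) =
    fine (P ((cpair \o g k j s) @^-1` B k j s)) *
    (if [&& k == 1, j == 1 & s == t] then p else 1).
  move=> k j s; rewrite /B'; case: ifP => [/and3P[/eqP -> /eqP -> /eqP ->]|_].
    by rewrite B11 preimage_setT probability_setT /= mul1r.
  by rewrite mulr1.
rewrite eA.
rewrite -(fineK (fin_num_measure P _ mA')) -(fineK (fin_num_measure P _ mA)).
rewrite -(fineK (fin_num_measure P _ mZ)) -EFinM; congr (_%:E).
rewrite [LHS]H' H0.
rewrite (eq_bigr (fun k => (\prod_(j < 2) \prod_(s < n) fine (P ((cpair \o g k j s) @^-1` B k j s))) *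
   (\prod_(j < 2) \prod_(s < n) (if [&& k == 1, j == 1 & s == t] then p else 1)))); last first.
  move=> k _; rewrite -big_split; apply: eq_bigr => j _; rewrite -big_split.
  by apply: eq_bigr => s _; rewrite eF.
by rewrite big_split /= prod_ind.
Qed.


Lemma mZ t : measurable_fun setT (Z t).
Proof. exact: mg. Qed.

Lemma indep_sigma t A B0 : <<s Pi t >> A -> measurable B0 ->
  P (A `&` Z t @^-1` B0) = (P A * P (Z t @^-1` B0))%E.
Proof.
move=> hA mB0.
have mZB : measurable (Z t @^-1` B0).
  rewrite -[X in measurable X]setTI; exact: mZ.
have p0 : (0 <= fine (P (Z t @^-1` B0)))%R by apply: fine_ge0; exact: measure_ge0.
pose m1 := mrestr P mZB.
pose m2 := mscale (NngNum p0) P.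
have := @g_sigma_algebra_measure_unique _ _ _ (Pi t) (@Pi_meas t) (fun _ => setT)
  (fun _ => Pi_T t) _ m1 m2 (@Pi_setI t) _ _ A hA.
rewrite /m1 /m2 => H; rewrite [LHS](_ : _ = mrestr P mZB A) // H.
- transitivity ((fine (P (Z t @^-1` B0)))%:E * P A)%E; first by [].
  by rewrite fineK ?fin_num_measure // muleC.
- by rewrite bigcup_const.
- move=> B hB.
  transitivity (P (B `&` Z t @^-1` B0)); first by [].
  transitivity ((fine (P (Z t @^-1` B0)))%:E * P B)%E; last by [].
  rewrite fineK ?fin_num_measure // muleC; exact: indep_Pi.
- move=> k; rewrite [X in (X < _)%E](_ : _ = P (setT `&` Z t @^-1` B0)) //.
  rewrite setTI; apply: (le_lt_trans (probability_le1 P mZB)); exact: ltey.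
Qed.


Lemma CPL t d' (T' : measurableType d') (X : Omega -> T') (E : set (T' * (R * R))) :
  (forall B, measurable B -> <<s Pi t >> (X @^-1` B)) -> measurable E ->
  (forall x, P (Z t @^-1` [set z | E (x, z)]) = 0%E) ->
  P [set w | E (X w, Z t w)] = 0%E.
Proof.
move=> hX mE h0.
have mX : measurable_fun setT X.
  by move=> _ B mB; rewrite setTI; exact: sPi_meas (hX B mB).
pose X' : {mfun Omega >-> T'} := mfun_Sub (mem_set mX).
pose Z' : {mfun Omega >-> (R * R)%type} := mfun_Sub (mem_set (mZ t)).
have mXZ : measurable_fun setT (fun w => (X w, Z t w)) := measurable_fun_pair mX (mZ t).
pose XZ' : {mfun Omega >-> (T' * (R * R))%type} := mfun_Sub (mem_set mXZ).
have H : forall A B, measurable A -> measurable B ->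
    distribution P XZ' (A `*` B) = (distribution P X' A * distribution P Z' B)%E.
  move=> A B mA mB.
  transitivity (P (X @^-1` A `&` Z t @^-1` B)); first by [].
  exact: indep_sigma (hX A mA) mB.
have HH := product_measure_unique H mE.
transitivity (distribution P XZ' E); first by [].
rewrite -HH.
rewrite /product_measure1 (eq_integral (cst 0%E)) ?integral0 // => x _.
rewrite /=.
have -> : xsection E x = [set y | E (x, y)].
  by apply/seteqP; split => y /=; rewrite /xsection /= in_setE.
exact: h0.
Qed.

End PiSys.


Section Meas.
Context (R : realType) d (Omega : measurableType d) (P : probability Omega R).
Context (n : nat) (g : 'I_2 -> 'I_2 -> 'I_n -> Omega -> R[i]).
Hypothesis Hiid : iid_continuous P g.
Local Notation C := R[i].
Local Notation GT t := (g_sigma_algebraType (Pi g t)).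

Lemma mC_g (t : 'I_n) (k j : 'I_2) (s : 'I_n) : allowed t k j s -> mC (fun w : GT t => g k j s w).
Proof.
move=> hal _ B mB; rewrite setTI; apply: sub_sigma_algebra.
exact: Pi_single.
Qed.

Lemma sPast (t s : 'I_n) : (s <= t)%N -> <<s past_events g s >> `<=` <<s Pi g t >>.
Proof.
move=> hst; apply: smallest_sub; first exact: smallest_sigma_algebra.
move=> A [k [j [s' [hs' [B [mB ->]]]]]].
apply: sub_sigma_algebra; apply: Pi_single => //.
by rewrite /allowed (leq_trans hs' hst).
Qed.

Lemma mC_f (t : 'I_n) m (f : 'I_n -> ('I_2 -> 'I_2 -> 'I_n -> C) -> 'rV[C]_m) :
  adapted g f -> forall (s : 'I_n) (i : 'I_m), (s <= t)%N ->
  mC (fun w : GT t => f s (gsample g w) 0 i).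
Proof.
move=> hf s i hst _ B mB; rewrite setTI; apply: (sPast hst).
exact: hf.
Qed.

End Meas.

Section AeFin.
Context (R : realType) d (Omega : measurableType d) (P : probability Omega R).

Lemma ae_fin (I : countType) (Q : I -> Omega -> Prop) :
  (forall i, \forall w \ae P, Q i w) -> \forall w \ae P, forall i, Q i w.
Proof.
move=> H.
have Hn : forall k : nat, \forall w \ae P, forall i, pickle i = k -> Q i w.
  move=> k; case: (pselect (exists i : I, pickle i = k)) => [[i0 hi0]|hno].
    move: (H i0); apply: filterS => w hw i hi.
    have -> : i = i0 by apply: (pcan_inj pickleK); rewrite hi hi0.
    exact: hw.
  by apply: aeW => w i hi; exfalso; apply: hno; exists i.
move: (ae_foralln Hn); apply: filterS => w hw i.
exact: (hw (pickle i) i erefl).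
Qed.

Lemma ae_negl (Q : Omega -> Prop) : P.-negligible [set w | Q w] -> \forall w \ae P, ~ Q w.
Proof. by move=> [N [mN N0 sN]]; exists N; split => // w /= /contrapT h; exact: (sN w h). Qed.

End AeFin.

Section Null.
Context (R : realType) d (Omega : measurableType d) (P : probability Omega R).
Context (n : nat) (g : 'I_2 -> 'I_2 -> 'I_n -> Omega -> R[i]).
Hypothesis Hiid : iid_continuous P g.
Local Notation C := R[i].
Local Notation GT t := (g_sigma_algebraType (Pi g t)).
Context (m1 m2 : nat) (f1 : 'I_n -> ('I_2 -> 'I_2 -> 'I_n -> C) -> 'rV[C]_m1)
  (f2 : 'I_n -> ('I_2 -> 'I_2 -> 'I_n -> C) -> 'rV[C]_m2).
Hypotheses (hf1 : adapted g f1) (hf2 : adapted g f2).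

Definition V1 w := Vmat f1 (gsample g w).
Definition V2 w := Vmat f2 (gsample g w).
Definition M2 w := blk (gsample g w) 1 (V1 w) (V2 w).
Definition uw (t : 'I_n) w : 'rV[C]_(m1 + m2) := row_mx (row t (V1 w)) 0.
Definition vw (t : 'I_n) w : 'rV[C]_(m1 + m2) := row_mx 0 (row t (V2 w)).

Ltac mcrw tac := apply: mC_congr; [let w := fresh "w" in move=> w; tac; reflexivity|].

Lemma mCM_A (t : 'I_n) : mCM (fun w : GT t => Pre t (M2 w)).
Proof.
move=> i j; mcrw ltac:(rewrite mxE).
case hi : (i < t)%N; last exact: mC_cst.
mcrw ltac:(rewrite /M2 blkE mxE).
case: (fintype.split j) => k; mcrw ltac:(rewrite mxE).
- apply: mC_mul; first by apply: mC_g; rewrite /allowed hi.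
  mcrw ltac:(rewrite /V1 mxE); by apply: mC_f => //; exact: ltnW.
- apply: mC_mul; first by apply: mC_g; rewrite /allowed hi.
  mcrw ltac:(rewrite /V2 mxE); by apply: mC_f => //; exact: ltnW.
Qed.

Lemma mCM_u (t : 'I_n) : mCM (fun w : GT t => uw t w).
Proof.
move=> i j; mcrw ltac:(rewrite mxE).
case: (fintype.split j) => k; mcrw ltac:(rewrite !mxE); last exact: mC_cst.
by apply: mC_f.
Qed.

Lemma mCM_v (t : 'I_n) : mCM (fun w : GT t => vw t w).
Proof.
move=> i j; mcrw ltac:(rewrite mxE).
case: (fintype.split j) => k; mcrw ltac:(rewrite !mxE); first exact: mC_cst.
by apply: mC_f.
Qed.


Lemma mGT_mfun (t : 'I_n) d' (T' : measurableType d') (X : Omega -> T') :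
  measurable_fun (setT : set (GT t)) X -> measurable_fun (setT : set Omega) X.
Proof.
move=> mX _ B mB; have := mX measurableT B mB.
move=> hB; apply: (sPi_meas Hiid); exact: hB.
Qed.

Definition al (t : 'I_n) r (f : {ffun 'I_r -> 'I_n}) (h : {ffun 'I_(r + 1) -> 'I_(m1 + m2)})
  (x : Omega -> 'rV[C]_(m1 + m2)) w :=
  \det (colsub h (col_mx (rowsub f (Pre t (M2 w))) (x w))).

Lemma mC_al (t : 'I_n) r (f : {ffun 'I_r -> 'I_n}) (h : {ffun 'I_(r + 1) -> 'I_(m1 + m2)})
  (x : Omega -> 'rV[C]_(m1 + m2)) :
  mCM (fun w : GT t => x w) -> mC (fun w : GT t => al t f h x w).
Proof.
move=> hx; apply: mC_det; apply: mCM_colsub; apply: mCM_col_mx => //.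
apply: mCM_rowsub; exact: mCM_A.
Qed.

Lemma null_N (t : 'I_n) r (f : {ffun 'I_r -> 'I_n}) (h : {ffun 'I_(r + 1) -> 'I_(m1 + m2)}) :
  P.-negligible [set w | (al t f h (uw t) w != 0 \/ al t f h (vw t) w != 0) /\
       g 1 0 t w * al t f h (uw t) w + g 1 1 t w * al t f h (vw t) w = 0].
Proof.
set au := al t f h (uw t); set av := al t f h (vw t).
pose X := fun w => ((cpair (au w), cpair (av w)), cpair (g 1 0 t w)).
pose E : set ((((R * R) * (R * R)) * (R * R)) * (R * R)) :=
  [set q | toC q.1.1.2 != 0 /\ toC q.1.2 * toC q.1.1.1 + toC q.2 * toC q.1.1.2 = 0].
have mXG : measurable_fun (setT : set (GT t)) X.
  apply: measurable_fun_pair; last by apply: mC_g; rewrite /allowed ltnn /= !eqxx.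
  apply: measurable_fun_pair; apply: mC_al; [exact: mCM_u|exact: mCM_v].
have hX : forall B, measurable B -> <<s Pi g t >> (X @^-1` B).
  by move=> B mB; have := mXG measurableT B mB; rewrite setTI.
have mX : measurable_fun setT X.
  exact: mGT_mfun mXG.
have mE : measurable E.
  have p112 : measurable_fun setT (fun q : (((R * R) * (R * R)) * (R * R)) * (R * R) => q.1.1.2).
    exact: measurableT_comp measurable_snd (measurableT_comp measurable_fst measurable_fst).
  have p111 : measurable_fun setT (fun q : (((R * R) * (R * R)) * (R * R)) * (R * R) => q.1.1.1).
    exact: measurableT_comp measurable_fst (measurableT_comp measurable_fst measurable_fst).
  have p12 : measurable_fun setT (fun q : (((R * R) * (R * R)) * (R * R)) * (R * R) => q.1.2).
    exact: measurableT_comp measurable_snd measurable_fst.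
  have p2 : measurable_fun setT (fun q : (((R * R) * (R * R)) * (R * R)) * (R * R) => q.2).
    exact: measurable_snd.
  have -> : E = ~` [set q | toC q.1.1.2 = 0] `&`
      [set q | toC q.1.2 * toC q.1.1.1 + toC q.2 * toC q.1.1.2 = 0].
    by apply/seteqP; split => q /= [h1 h2]; split => //; apply/eqP.
  apply: measurableI; first by apply: measurableC; apply: mC_eq0; exact: mC_toC.
  apply: mC_eq0; apply: mC_add; apply: mC_mul; exact: mC_toC.
have hsec : forall x, P (Z g t @^-1` [set z | E (x, z)]) = 0%E.
  move=> x; case: (eqVneq (toC x.1.2) 0) => hx.
    rewrite (_ : Z g t @^-1` [set z | E (x, z)] = set0) ?measure0 //.
    by apply/seteqP; split => w //= [/negP]; rewrite hx eqxx.
  pose c := - (toC x.2 * toC x.1.1) / toC x.1.2.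
  rewrite (_ : Z g t @^-1` [set z | E (x, z)] = [set w | g 1 1 t w = c]).
    by case: Hiid => _ _ _ h4; exact: h4.
  apply/seteqP; split => w /=; rewrite /E /= /Z cpairK.
    move=> [_ /eqP]; rewrite addrC addr_eq0 => /eqP e.
    by rewrite /c -e mulfK.
  move=> ->; split => //; rewrite /c divfK // addrC.
  exact: addNr.
have n1 : P.-negligible [set w | g 1 0 t w = 0].
  apply/negligibleP; last by case: Hiid => _ _ _ h4; exact: h4.
  apply: mC_eq0; exact: (mg Hiid).
have n2 : P.-negligible [set w | E (X w, Z g t w)].
  apply/negligibleP; last exact: (CPL Hiid hX mE hsec).
  have mXZ := measurable_fun_pair mX (mZ Hiid t).
  by rewrite -[X in measurable X]setTI; exact: mXZ.
apply: negligibleS (negligibleU n1 n2) => w /= [hne e].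
case: (eqVneq (av w) 0) => hv.
  left; move: hne e; rewrite hv mulr0 addr0 => -[hu|] ; last by rewrite eqxx.
  by move/eqP; rewrite mulf_eq0 (negPf hu) orbF => /eqP.
by right; rewrite /E /= !cpairK; split.
Qed.


Lemma ae_bad : \forall w \ae P, forall t : 'I_n,
  t \notin Tset (gsample g w) (V1 w) (V2 w) -> ~~ (row t (M2 w) <= Pre t (M2 w))%MS.
Proof.
have H : \forall w \ae P, forall t : 'I_n, forall r : nat,
    forall fh : {ffun 'I_r -> 'I_n} * {ffun 'I_(r + 1) -> 'I_(m1 + m2)},
    ~ ((al t fh.1 fh.2 (uw t) w != 0 \/ al t fh.1 fh.2 (vw t) w != 0) /\
       g 1 0 t w * al t fh.1 fh.2 (uw t) w + g 1 1 t w * al t fh.1 fh.2 (vw t) w = 0).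
  apply: ae_fin => t; apply: ae_fin => r; apply: ae_fin => fh.
  exact: ae_negl (null_N t fh.1 fh.2).
move: H; apply: filterS => w H t ht; apply/negP => hrow.
have hA : ((g 1 0 t w *: uw t w + g 1 1 t w *: vw t w)%R <= Pre t (M2 w))%MS.
  by rewrite /uw /vw -[g 1 0 t w]/(gsample g w 1 0 t) -[g 1 1 t w]/(gsample g w 1 1 t) -row_blk1.
have huv : ~~ ((uw t w <= Pre t (M2 w))%MS && (vw t w <= Pre t (M2 w))%MS).
  by move: ht; rewrite inE /uw /vw /M2 !sub_lead_blk.
have [r [f [h [H1 H2]]]] := cover_det hA huv.
exact: (H t r (f, h)).
Qed.

Lemma ae_nz : \forall w \ae P, forall (k : 'I_2) (s : 'I_n), g 1 k s w != 0.
Proof.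
apply: ae_fin => k; apply: ae_fin => s.
apply: (filterS _ (ae_negl (Q := fun w => g 1 k s w = 0) _)); first by move=> w /eqP.
apply/negligibleP; last by case: Hiid => _ _ _ h4; exact: h4.
apply: mC_eq0; exact: (mg Hiid).
Qed.

End Null.

From mathcomp Require Import zify ring lra.

Lemma natZ_sub (a b c : nat) : (a + b <= c)%N -> (a%:Z <= c%:Z - b%:Z)%R.
Proof. move=> h; lia. Qed.

Unset Implicit Arguments. Set Strict Implicit. Set Printing Implicit Defensive.

Theorem lemma5 (R : realType) (d : measure_display) (Omega : measurableType d)
  (P : probability Omega R) (n m1 m2 : nat)
  (g : 'I_2 -> 'I_2 -> 'I_n -> Omega -> R[i])
  (f1 : 'I_n -> ('I_2 -> 'I_2 -> 'I_n -> R[i]) -> 'rV[R[i]]_m1)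
  (f2 : 'I_n -> ('I_2 -> 'I_2 -> 'I_n -> R[i]) -> 'rV[R[i]]_m2) :
  (0 < m1)%N -> (0 < m2)%N ->
  iid_continuous P g ->
  causal f1 -> causal f2 ->
  adapted g f1 -> adapted g f2 ->
  let V1 := fun w => Vmat f1 (gsample g w) in
  let V2 := fun w => Vmat f2 (gsample g w) in
  let M1 := fun w => blk (gsample g w) 0 (V1 w) (V2 w) in
  let M2 := fun w => blk (gsample g w) 1 (V1 w) (V2 w) in
  let T := fun w => Tset (gsample g w) (V1 w) (V2 w) in
  let r1 := fun w => span_dim
    [set s : 'rV[R[i]]_m1 | exists l : 'rV[R[i]]_n,
       row_mx s (0 : 'rV[R[i]]_m2) = l *m M2 w] in
  let r2 := fun w => span_dim
    [set s : 'rV[R[i]]_m2 | exists l : 'rV[R[i]]_n,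
       row_mx (0 : 'rV[R[i]]_m1) s = l *m M2 w] in
  [/\ {ae P, forall w,
         (\rank (M1 w))%:Z - (\rank (M2 w))%:Z
           <= (\rank (sub_blk (T w) (gsample g w) (V1 w) (V2 w)))%:Z},
      (forall w, (\rank (sub_rows (T w) (V1 w)) <= r1 w)%N /\
                 (\rank (sub_rows (T w) (V2 w)) <= r2 w)%N)
    & {ae P, forall w,
         (r1 w)%:Z <= (\rank (M2 w))%:Z - (\rank (V2 w))%:Z /\
         (r2 w)%:Z <= (\rank (M2 w))%:Z - (\rank (V1 w))%:Z}].
Proof.
move=> _ _ Hiid _ _ ha1 ha2 V1 V2 M1 M2 T r1 r2; split.
- move: (ae_bad Hiid ha1 ha2); apply: filterS => w hb.
  have h1 := rank_split (M1 w) (T w).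
  rewrite -sub_blkE in h1.
  have h2 : (#|~: T w| <= \rank (M2 w))%N.
    apply: rank_ge_card => t; rewrite inE; exact: hb.
  lia.
- move=> w; split.
  + apply: span_dim_le => i.
    have hi := enum_valP i.
    move: hi; rewrite inE => /andP[h _].
    rewrite sub_lead_blk in h.
    have /submxP[D hD] := submx_trans h (Pre_sub _ _).
    exists D; rewrite -hD; congr row_mx.
    by apply/rowP => j; rewrite !mxE.
  + apply: span_dim_le => i.
    have hi := enum_valP i.
    move: hi; rewrite inE => /andP[_ h].
    rewrite sub_lead_blk in h.
    have /submxP[D hD] := submx_trans h (Pre_sub _ _).
    exists D; rewrite -hD; congr row_mx.
    by apply/rowP => j; rewrite !mxE.
- move: (ae_nz Hiid); apply: filterS => w hnz.
  have e1 := span1_bound (Gmat (gsample g w) 1 0 *m V1 w) (Gmat (gsample g w) 1 1 *m V2 w).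
  have e2 := span2_bound (Gmat (gsample g w) 1 0 *m V1 w) (Gmat (gsample g w) 1 1 *m V2 w).
  rewrite /Gmat rank_diag_mul in e1; last by move=> i; rewrite mxE; exact: hnz.
  rewrite /Gmat rank_diag_mul in e2; last by move=> i; rewrite mxE; exact: hnz.
  by split; apply: natZ_sub.
Qed.
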